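(* Let $E_0>0$ and let $\phi$ satisfy the standing assumptions below with $n\le3$. Then there exists $\delta>0$ such that for all $V\in(E_0-\delta,E_0)$, $\left|\frac{\xi_{1/2}(V)}{\xi_{-1/2}(V)}\cdot\frac{\zeta(V)}{\xi_{-1/2}(V)}\right|<\frac45$.
   Context: Standing assumptions on $\phi:(-\infty,1]\to\mathbb R_+$: $\phi(x)=0$ for $x<0$, $\phi$ analytic on $[0,1]$, and there is $n\in\{0,1,2,\dots\}$ with $\phi'(0)=\dots=\phi^{(n-1)}(0)=0$, $\phi^{(n)}(0)>0$. Put $\Phi(E)=\phi(1-E/E_0)$. For $\kappa\in\{\frac32,\frac12,-\frac12\}$ and $V\in(0,E_0]$: $\xi_\kappa(V)=\frac{4\pi}{V}\int_V^{E_0}\Phi(E)\left(\frac{E^2}{V^2}-1\right)^\kappa dE$. For $V\in(0,E_0)$: $\zeta(V)=-4\pi\frac{d}{dV}\left(\int_V^{E_0}\Phi(E)\left(\frac{E^2}{V^2}-1\right)^{-1/2}dE\right)$, so that $\xi_{-1/2}'(V)=-\frac1V(\xi_{-1/2}(V)+\zeta(V))$. *)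

(* Defs.v *)
From Stdlib Require Import Reals Lra ClassicalEpsilon.
Open Scope R_scope.

Definition analytic_on01 (phi : R -> R) : Prop :=
  forall x0, 0 <= x0 <= 1 ->
    exists (a : nat -> R) (r : R), 0 < r /\
      forall x, 0 <= x <= 1 -> Rabs (x - x0) < r -> Pser a (x - x0) (phi x).

(* Since phi is analytic at 0 (from
   the right), phi^(k)(0) = k! * a k where a is its Taylor series at 0; hence
   phi'(0)=...=phi^(n-1)(0)=0 and phi^(n)(0)>0 iff a k = 0 (k<n) and a n > 0. *)
Definition standing_assumptions (phi : R -> R) (n : nat) : Prop :=
  (forall x, x <= 1 -> 0 <= phi x) /\
  (forall x, x < 0 -> phi x = 0) /\
  analytic_on01 phi /\
  (exists (a : nat -> R) (r : R), 0 < r /\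
     (forall x, 0 <= x < r -> x <= 1 -> Pser a x (phi x)) /\
     (forall k, (k < n)%nat -> a k = 0) /\ 0 < a n).

Definition Phi (phi : R -> R) (E0 E : R) : R := phi (1 - E / E0).

Definition has_integral (f : R -> R) (a b I : R) : Prop :=
  exists pr : Riemann_integrable f a b, RiemannInt pr = I.

Definition has_impint (f : R -> R) (a b I : R) : Prop :=
  forall eps, 0 < eps -> exists del, 0 < del /\
    forall c, a < c < a + del -> c <= b ->
      exists J, has_integral f c b J /\ Rabs (J - I) < eps.

(* Value of the improper integral (0 if it does not exist). *)
Definition impint (f : R -> R) (a b : R) : R :=
  match excluded_middle_informative (exists I, has_impint f a b I) with
  | left H => proj1_sig (constructive_indefinite_description _ H)
  | right _ => 0
  end.

(* Derivative value (0 if not differentiable). *)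
Definition deriv (f : R -> R) (x : R) : R :=
  match excluded_middle_informative (exists l, derivable_pt_lim f x l) with
  | left H => proj1_sig (constructive_indefinite_description _ H)
  | right _ => 0
  end.

Definition xi (phi : R -> R) (E0 kappa V : R) : R :=
  4 * PI / V *
  impint (fun E => Phi phi E0 E * Rpower (E ^ 2 / V ^ 2 - 1) kappa) V E0.

Definition zeta (phi : R -> R) (E0 V : R) : R :=
  - 4 * PI *
  deriv (fun W => impint (fun E => Phi phi E0 E * Rpower (E ^ 2 / W ^ 2 - 1) (-1/2)) W E0) V.

(* Main.v *)
Require Import Defs.
From Stdlib Require Import Reals Lra Lia Psatz ClassicalEpsilon.
From Coquelicot Require Import Coquelicot.
Open Scope R_scope.

Lemma impint_unique (f : R -> R) (a b Iv : R) :
  a < b -> has_impint f a b Iv -> impint f a b = Iv.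
Proof.
  intros Hab HI. unfold impint.
  destruct (excluded_middle_informative _) as [H|H].
  2:{ exfalso; apply H; exists Iv; exact HI. }
  destruct (constructive_indefinite_description _ H) as [Iv' HI']; simpl.
  destruct (Req_dec Iv' Iv) as [e|ne]; [exact e|exfalso].
  set (d := Rabs (Iv' - Iv)).
  assert (Hd : 0 < d) by (apply Rabs_pos_lt; lra).
  destruct (HI (d/2) ltac:(lra)) as [d1 [Hd1 H1]].
  destruct (HI' (d/2) ltac:(lra)) as [d2 [Hd2 H2]].
  set (c := a + Rmin (Rmin d1 d2) (b - a) / 2).
  assert (Hm1 : Rmin (Rmin d1 d2) (b - a) <= Rmin d1 d2) by apply Rmin_l.
  assert (Hm2 : Rmin (Rmin d1 d2) (b - a) <= b - a) by apply Rmin_r.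
  assert (Hm3 : Rmin d1 d2 <= d1) by apply Rmin_l.
  assert (Hm4 : Rmin d1 d2 <= d2) by apply Rmin_r.
  assert (Hm0 : 0 < Rmin (Rmin d1 d2) (b - a)).
  { apply Rmin_pos; [apply Rmin_pos|]; lra. }
  destruct (H1 c ltac:(unfold c; lra) ltac:(unfold c; lra)) as [J1 [HJ1 B1]]; destruct HJ1 as [p1 e1].
  destruct (H2 c ltac:(unfold c; lra) ltac:(unfold c; lra)) as [J2 [HJ2 B2]]; destruct HJ2 as [p2 e2].
  assert (HJ : J1 = J2) by (rewrite <- e1, <- e2; apply RiemannInt_P5).
  rewrite <- HJ in B2.
  assert (Rabs (Iv' - Iv) <= Rabs (J1 - Iv) + Rabs (J1 - Iv')).
  { replace (Iv' - Iv) with ((J1 - Iv) - (J1 - Iv')) by ring.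
    eapply Rle_trans; [apply Rabs_triang|]. rewrite Rabs_Ropp. lra. }
  assert (d = Rabs (Iv' - Iv)) by reflexivity. lra.
Qed.

Lemma deriv_bound (F : R -> R) (V U t0 : R) :
  0 < t0 -> (forall t, 0 < t < t0 -> Rabs ((F (V + t) - F V) / t) <= U) ->
  Rabs (deriv F V) <= U.
Proof.
  intros Ht0 HB. unfold deriv.
  destruct (excluded_middle_informative _) as [H|H].
  - destruct (constructive_indefinite_description _ H) as [l Hl]; simpl.
    destruct (Rle_or_lt (Rabs l) U) as [ok|bad]; [exact ok|exfalso].
    destruct (Hl (Rabs l - U) ltac:(lra)) as [del Hdel].
    set (t := Rmin del t0 / 2).
    assert (Hm1 : Rmin del t0 <= del) by apply Rmin_l.
    assert (Hm2 : Rmin del t0 <= t0) by apply Rmin_r.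
    assert (Hm0 : 0 < Rmin del t0) by (apply Rmin_pos; [apply cond_pos|lra]).
    assert (Ht : 0 < t < t0) by (unfold t; lra).
    specialize (HB t Ht).
    assert (Habs : Rabs t < del) by (rewrite Rabs_pos_eq; unfold t; lra).
    specialize (Hdel t ltac:(lra) Habs).
    assert (Rabs l <= Rabs ((F (V + t) - F V) / t) + Rabs ((F (V + t) - F V) / t - l)).
    { replace l with (((F (V + t) - F V) / t) - (((F (V + t) - F V) / t) - l)) at 1 by ring.
      apply Rabs_triang_inv2 || (eapply Rle_trans; [apply Rabs_triang|]; rewrite Rabs_Ropp; lra). }
    lra.
  - rewrite Rabs_R0. specialize (HB (t0/2) ltac:(lra)).
    eapply Rle_trans; [apply Rabs_pos|exact HB].
Qed.


Lemma exd_cont (f : R -> R) (x : R) : ex_derive f x -> continuous f x.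
Proof. intros H. apply (ex_derive_continuous (K:=R_AbsRing) (V:=R_NormedModule)). exact H. Qed.

Lemma cont_bounded (g0 : R -> R) (a b : R) : a <= b ->
  (forall s, a <= s <= b -> continuous g0 s) ->
  exists M, 0 < M /\ forall s, a <= s <= b -> Rabs (g0 s) <= M.
Proof.
  intros Hab Hc.
  assert (Hc' : forall s, a <= s <= b -> continuity_pt g0 s).
  { intros s Hs. apply continuity_pt_filterlim. apply Hc; auto. }
  destruct (continuity_ab_maj g0 a b Hab Hc') as [x1 [H1 _]].
  destruct (continuity_ab_maj (fun s => - g0 s) a b Hab) as [x2 [H2 _]].
  { intros s Hs. apply continuity_pt_opp. auto. }
  exists (Rabs (g0 x1) + Rabs (g0 x2) + 1). split.
  { pose proof (Rabs_pos (g0 x1)); pose proof (Rabs_pos (g0 x2)); lra. }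
  intros s Hs. specialize (H1 s Hs). specialize (H2 s Hs).
  pose proof (Rle_abs (g0 x1)) as K1. pose proof (Rle_abs (- g0 x2)) as K2.
  rewrite Rabs_Ropp in K2.
  destruct (Rle_or_lt 0 (g0 s)).
  - rewrite Rabs_pos_eq by lra. pose proof (Rabs_pos (g0 x2)). lra.
  - rewrite Rabs_left by lra. pose proof (Rabs_pos (g0 x1)). lra.
Qed.

Lemma subst_impint (f ft g0 : R -> R) (W E0 : R) :
  W < E0 ->
  (forall E, W < E < E0 -> f E = ft E) ->
  (forall E, W < E <= E0 -> continuous ft E) ->
  (forall s, 0 <= s <= 1 -> continuous g0 s) ->
  (forall s, 0 < s <= 1 -> 2*(E0-W)*s * ft (W + (E0-W)*s^2) = g0 s) ->
  has_impint f W E0 (RInt g0 0 1).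
Proof.
  intros HW Hf Hft Hg0 Hsub eps Heps.
  set (L := E0 - W).
  assert (HL : 0 < L) by (unfold L; lra).
  destruct (cont_bounded g0 0 1 ltac:(lra) Hg0) as [M [HM HMb]].
  set (m := Rmin 1 (eps / (2*M))).
  assert (Hm : 0 < m) by (apply Rmin_pos; [lra| apply Rdiv_lt_0_compat; lra]).
  assert (Hm1 : m <= eps/(2*M)) by apply Rmin_r.
  exists (L * m^2). split; [apply Rmult_lt_0_compat; [lra|apply pow_lt; lra]|].
  intros c Hc HcE.
  set (sg := sqrt ((c - W)/L)).
  assert (Hq : 0 < (c - W)/L) by (apply Rdiv_lt_0_compat; lra).
  assert (Hsg2 : sg * sg = (c - W)/L) by (apply sqrt_sqrt; lra).
  assert (Hsg0 : 0 < sg) by (apply sqrt_lt_R0; auto).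
  assert (Hq1 : (c - W)/L <= 1) by (apply (proj1 (Rdiv_le_1 _ _ HL)); unfold L; lra).
  assert (Hsg1 : sg <= 1).
  { destruct (Rle_or_lt sg 1) as [h|h]; [exact h|].
    assert (sg * sg > 1 * 1) by (apply Rmult_gt_0_lt_compat; lra). lra. }
  assert (Hqm : (c - W)/L < m^2).
  { apply (proj2 (Rlt_div_l _ _ _ HL)). lra. }
  assert (Hsgm : sg < m).
  { destruct (Rle_or_lt m sg) as [h|h]; [|exact h].
    assert (m * m <= sg * sg) by (apply Rmult_le_compat; lra).
    replace (m^2) with (m*m) in Hqm by ring. lra. }
  assert (Hcg : W + L * sg^2 = c).
  { replace (sg^2) with (sg*sg) by ring. rewrite Hsg2. field. lra. }
  assert (Hexft : ex_RInt ft c E0).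
  { apply (ex_RInt_continuous (V:=R_CompleteNormedModule)). intros z Hz.
    rewrite Rmin_left in Hz by lra. rewrite Rmax_right in Hz by lra.
    apply Hft. lra. }
  assert (Hexf : ex_RInt f c E0).
  { apply ex_RInt_ext with ft; [|exact Hexft].
    intros z Hz. rewrite Rmin_left in Hz by lra. rewrite Rmax_right in Hz by lra.
    symmetry. apply Hf. lra. }
  assert (Hcomp : RInt ft c E0 = RInt g0 sg 1).
  { assert (P1 : forall x, Rmin sg 1 <= x <= Rmax sg 1 -> continuous ft (W + L * x^2)).
    { intros x Hx. rewrite Rmin_left in Hx by lra. rewrite Rmax_right in Hx by lra.
      apply Hft. split.
      + assert (0 < L * x^2) by (apply Rmult_lt_0_compat; [lra|apply pow_lt; lra]). lra.
      + assert (x^2 <= 1) by (replace (x^2) with (x*x) by ring; replace 1 with (1*1) by ring;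
                              apply Rmult_le_compat; lra).
        assert (L * x^2 <= L * 1) by (apply Rmult_le_compat_l; lra). unfold L in *. lra. }
    assert (P2 : forall x, Rmin sg 1 <= x <= Rmax sg 1 ->
              is_derive (fun s => W + L * s^2) x (2 * L * x) /\ continuous (fun s => 2 * L * s) x).
    { intros x Hx. split.
      + auto_derive; [auto|ring].
      + apply exd_cont. auto_derive. auto. }
    pose proof (is_RInt_comp (V:=R_CompleteNormedModule) ft (fun s => W + L * s^2) (fun s => 2 * L * s) sg 1 P1 P2) as Hc1.

    cbv beta in Hc1. rewrite Hcg in Hc1. replace (W + L * 1^2) with E0 in Hc1 by (unfold L; ring).
    symmetry. apply is_RInt_unique.
    apply is_RInt_ext with (2 := Hc1).
    intros x Hx. rewrite Rmin_left in Hx by lra. rewrite Rmax_right in Hx by lra.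
    rewrite <- Hsub by lra. unfold scal; simpl; unfold mult; simpl. unfold L; ring. }
  assert (Hex0 : ex_RInt g0 0 sg).
  { apply (ex_RInt_continuous (V:=R_CompleteNormedModule)). intros z Hz.
    rewrite Rmin_left in Hz by lra. rewrite Rmax_right in Hz by lra. apply Hg0; lra. }
  assert (Hex1 : ex_RInt g0 sg 1).
  { apply (ex_RInt_continuous (V:=R_CompleteNormedModule)). intros z Hz.
    rewrite Rmin_left in Hz by lra. rewrite Rmax_right in Hz by lra. apply Hg0; lra. }
  exists (RInt g0 sg 1). split.
  - exists (ex_RInt_Reals_0 _ _ _ Hexf).
    rewrite <- RInt_Reals. rewrite <- Hcomp.
    apply RInt_ext. intros z Hz. rewrite Rmin_left in Hz by lra. rewrite Rmax_right in Hz by lra.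
    apply Hf. lra.
  - rewrite <- (RInt_Chasles g0 0 sg 1 Hex0 Hex1). unfold plus; simpl.
    replace (RInt g0 sg 1 - (RInt g0 0 sg + RInt g0 sg 1)) with (- RInt g0 0 sg) by ring.
    rewrite Rabs_Ropp.
    assert (Hup : RInt g0 0 sg <= RInt (fun _ => M) 0 sg).
    { apply RInt_le; auto; [lra| apply ex_RInt_const|].
      intros x Hx. pose proof (HMb x ltac:(lra)). pose proof (Rle_abs (g0 x)). lra. }
    assert (Hlo : RInt (fun _ => - M) 0 sg <= RInt g0 0 sg).
    { apply RInt_le; auto; [lra| apply ex_RInt_const|].
      intros x Hx. pose proof (HMb x ltac:(lra)). pose proof (Rle_abs (- g0 x)) as K3.
      rewrite Rabs_Ropp in K3. lra. }
    rewrite !RInt_const in Hup, Hlo. unfold scal in Hup, Hlo; simpl in Hup, Hlo;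
    unfold mult in Hup, Hlo; simpl in Hup, Hlo.
    assert (sg * M < eps).
    { assert (K1 : sg * M < m * M) by (apply Rmult_lt_compat_r; lra).
      assert (K2 : m * M <= eps / (2*M) * M) by (apply Rmult_le_compat_r; lra).
      replace (eps / (2*M) * M) with (eps/2) in K2 by (field; lra). lra. }
    unfold Rabs; destruct (Rcase_abs _); lra.
Qed.


Lemma CV_radius_decr_n (a : nat -> R) (n : nat) : CV_radius (PS_decr_n a n) = CV_radius a.
Proof.
  induction n.
  - apply CV_radius_ext. intros k. reflexivity.
  - rewrite <- IHn, <- (CV_radius_decr_1 (PS_decr_n a n)).
    apply CV_radius_ext. intros k. unfold PS_decr_n, PS_decr_1. f_equal. lia.
Qed.

Lemma ps_setup (phi : R -> R) (n : nat) : standing_assumptions phi n ->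
  exists (b : nat -> R) (rho : R), 0 < rho /\ rho <= 1 /\
    (forall x, Rabs x < rho -> Rbar_lt (Rabs x) (CV_radius b)) /\
    (forall u, 0 <= u < rho -> phi u = u^n * PSeries b u) /\ 0 < PSeries b 0.
Proof.
  intros [_ [_ [_ [a [r [Hr [Hser [Hz Hpos]]]]]]]].
  set (x1 := Rmin (r/2) 1).
  assert (Hx1 : 0 < x1) by (apply Rmin_pos; lra).
  assert (Hx1r : x1 <= r/2) by apply Rmin_l.
  assert (Hx11 : x1 <= 1) by apply Rmin_r.
  assert (Hrad : Rbar_le x1 (CV_radius a)).
  { apply Rbar_not_lt_le. intros Hlt.
    assert (Habs : Rabs x1 = x1) by (apply Rabs_pos_eq; lra).
    rewrite <- Habs in Hlt.
    apply (CV_disk_outside a x1 Hlt).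
    pose proof (Hser x1 ltac:(lra) Hx11) as HP.
    apply is_pseries_Reals in HP.
    assert (Hex : ex_series (fun k => scal (pow_n x1 k) (a k))) by (eexists; exact HP).
    apply ex_series_lim_0 in Hex.
    eapply is_lim_seq_ext; [|exact Hex].
    intros k. simpl. unfold scal; simpl; unfold mult; simpl. rewrite pow_n_pow. ring. }
  exists (PS_decr_n a n), x1. repeat split; auto.
  - intros x Hx. rewrite CV_radius_decr_n.
    eapply Rbar_lt_le_trans; [|exact Hrad]. simpl. exact Hx.
  - intros u Hu. rewrite <- PSeries_decr_n_aux by auto.
    symmetry. apply is_pseries_unique. apply is_pseries_Reals. apply Hser; lra.
  - rewrite PSeries_0. unfold PS_decr_n. rewrite Nat.add_0_r. exact Hpos.
Qed.

Lemma cont_eps (f : R -> R) (x : R) : continuity_pt f x ->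
  forall eps, 0 < eps -> exists d, 0 < d /\ forall y, Rabs (y - x) < d -> Rabs (f y - f x) < eps.
Proof.
  intros Hc eps He. destruct (Hc eps He) as [d [Hd Hy]].
  exists d; split; auto. intros y Hyx.
  destruct (Req_dec y x) as [->|ne].
  - rewrite Rminus_eq_0, Rabs_R0; auto.
  - apply (Hy y). split; [split; [exact I|auto]|]. simpl. unfold R_dist. auto.
Qed.

Definition epsQ := / 1000.

Lemma choose_u0 (b : nat -> R) (rho : R) : 0 < rho ->
  (forall x, Rabs x < rho -> Rbar_lt (Rabs x) (CV_radius b)) -> 0 < PSeries b 0 ->
  exists u0, 0 < u0 /\ u0 <= / 1000 /\ u0 < rho /\
    forall u, Rabs u <= u0 -> Rabs (PSeries b u - PSeries b 0) <= epsQ * PSeries b 0 /\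
                          Rabs (u * PSeries (PS_derive b) u) <= epsQ * PSeries b 0.
Proof.
  intros Hrho Hrad HA.
  set (A := PSeries b 0).
  assert (H0 : Rbar_lt (Rabs 0) (CV_radius b)) by (apply Hrad; rewrite Rabs_R0; lra).
  assert (HeA : 0 < epsQ * A) by (unfold epsQ, A; lra).
  destruct (cont_eps _ _ (PSeries_continuity b 0 H0) (epsQ * A) HeA) as [d1 [Hd1 H1]].
  rewrite <- CV_radius_derive in H0.
  destruct (cont_eps _ _ (PSeries_continuity _ 0 H0) 1 ltac:(lra)) as [d2 [Hd2 H2]].
  set (M2 := Rabs (PSeries (PS_derive b) 0) + 1).
  assert (HM2 : 0 < M2) by (unfold M2; pose proof (Rabs_pos (PSeries (PS_derive b) 0)); lra).
  exists (Rmin (Rmin (d1/2) (d2/2)) (Rmin (Rmin (/1000) (rho/2)) (epsQ * A / M2))).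
  set (u0 := Rmin (Rmin (d1/2) (d2/2)) (Rmin (Rmin (/1000) (rho/2)) (epsQ * A / M2))).
  assert (Hp : 0 < epsQ * A / M2) by (apply Rdiv_lt_0_compat; lra).
  assert (Hu0 : 0 < u0).
  { unfold u0. repeat apply Rmin_pos; lra. }
  assert (B1 : u0 <= d1/2) by (unfold u0; eapply Rle_trans; [apply Rmin_l|apply Rmin_l]).
  assert (B2 : u0 <= d2/2) by (unfold u0; eapply Rle_trans; [apply Rmin_l|apply Rmin_r]).
  assert (B3 : u0 <= /1000) by (unfold u0; eapply Rle_trans; [apply Rmin_r|]; eapply Rle_trans; [apply Rmin_l|apply Rmin_l]).
  assert (B4 : u0 <= rho/2) by (unfold u0; eapply Rle_trans; [apply Rmin_r|]; eapply Rle_trans; [apply Rmin_l|apply Rmin_r]).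
  assert (B5 : u0 <= epsQ * A / M2) by (unfold u0; eapply Rle_trans; [apply Rmin_r|apply Rmin_r]).
  split; [auto|split; [auto|split; [lra|]]].
  intros u Hu. split.
  - left. apply H1. rewrite Rminus_0_r. lra.
  - specialize (H2 u ltac:(rewrite Rminus_0_r; lra)).
    assert (Hq : Rabs (PSeries (PS_derive b) u) <= M2).
    { unfold M2. pose proof (Rabs_triang_inv (PSeries (PS_derive b) u) (PSeries (PS_derive b) 0)). lra. }
    rewrite Rabs_mult.
    assert (Rabs u * Rabs (PSeries (PS_derive b) u) <= (epsQ * A / M2) * M2).
    { apply Rmult_le_compat; try apply Rabs_pos; lra. }
    replace (epsQ * A / M2 * M2) with (epsQ * A) in H by (field; lra). exact H.
Qed.


Definition Good (phi : R -> R) (n : nat) (b : nat -> R) (u0 : R) : Prop :=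
  0 < u0 /\ u0 <= / 1000 /\
  (forall x, Rabs x <= u0 -> Rbar_lt (Rabs x) (CV_radius b)) /\
  (forall u, 0 <= u <= u0 -> phi u = u^n * PSeries b u) /\
  0 < PSeries b 0 /\
  (forall u, Rabs u <= u0 -> Rabs (PSeries b u - PSeries b 0) <= epsQ * PSeries b 0 /\
                          Rabs (u * PSeries (PS_derive b) u) <= epsQ * PSeries b 0).

Lemma good_exists (phi : R -> R) (n : nat) : standing_assumptions phi n ->
  exists b u0, Good phi n b u0.
Proof.
  intros H. destruct (ps_setup phi n H) as [b [rho [Hr [Hr1 [Hrad [Hphi HA]]]]]].
  destruct (choose_u0 b rho Hr Hrad HA) as [u0 [Hu0 [Hu1 [Hu2 Hu3]]]].
  exists b, u0. repeat split; auto.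
  - intros x Hx. apply Hrad. lra.
  - intros u Hu. apply Hphi. lra.
  - apply Hu3; auto.
  - apply Hu3; auto.
Qed.

Definition Pt (b : nat -> R) (n : nat) (u : R) := u^n * PSeries b u.

Definition gm (b : nat -> R) (n : nat) (E0 W s : R) :=
  Pt b n ((E0 - W) * (1 - s^2) / E0) * (2 * W * sqrt (E0 - W) / sqrt (2 * W + (E0 - W) * s^2)).

Definition gp (b : nat -> R) (n : nat) (E0 V s : R) :=
  Pt b n ((E0 - V) * (1 - s^2) / E0) *
  (2 * (E0 - V) * sqrt (E0 - V) * s^2 * sqrt (2 * V + (E0 - V) * s^2) / V).

Lemma sqrt_id (W L s : R) : 0 < W -> 0 < L -> 0 < s ->
  sqrt ((W + L * s^2)^2 / W^2 - 1) = sqrt L * s * sqrt (2 * W + L * s^2) / W.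
Proof.
  intros HW HL Hs. apply sqrt_lem_1.
  - assert (0 < L * s^2) by (apply Rmult_lt_0_compat; [lra|apply pow_lt; lra]).
    replace ((W + L * s^2)^2 / W^2 - 1) with ((L*s^2) * (2*W + L*s^2) / W^2) by (field; lra).
    apply Rlt_le. apply Rdiv_lt_0_compat; [apply Rmult_lt_0_compat; lra|apply pow_lt; lra].
  - apply Rlt_le. apply Rdiv_lt_0_compat; [|lra].
    apply Rmult_lt_0_compat; [apply Rmult_lt_0_compat; [apply sqrt_lt_R0; lra|lra]|].
    apply sqrt_lt_R0. assert (0 < L * s^2) by (apply Rmult_lt_0_compat; [lra|apply pow_lt; lra]). lra.
  - assert (0 < L * s^2) by (apply Rmult_lt_0_compat; [lra|apply pow_lt; lra]).
    replace (sqrt L * s * sqrt (2 * W + L * s ^ 2) / W * (sqrt L * s * sqrt (2 * W + L * s ^ 2) / W))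
      with ((sqrt L * sqrt L) * s^2 * (sqrt (2 * W + L * s ^ 2) * sqrt (2 * W + L * s ^ 2)) / W^2)
      by (field; lra).
    rewrite !sqrt_sqrt by lra. field. lra.
Qed.

Lemma Rpower_mhalf (x : R) : 0 < x -> Rpower x (-1/2) = / sqrt x.
Proof. intros Hx. replace (-1/2) with (- (/2)) by field. rewrite Rpower_Ropp, Rpower_sqrt; auto. Qed.

Lemma Rpower_half (x : R) : 0 < x -> Rpower x (1/2) = sqrt x.
Proof. intros Hx. replace (1/2) with (/2) by field. rewrite Rpower_sqrt; auto. Qed.

Lemma Q_exd (phi : R -> R) (n : nat) (b : nat -> R) (u0 x : R) : Good phi n b u0 ->
  Rabs x <= u0 -> ex_derive (fun y => PSeries b y) x.
Proof. intros [_ [_ [Hr _]]] Hx. apply ex_derive_PSeries. apply Hr; auto. Qed.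

Lemma u_range (E0 W s : R) (u0 : R) : 0 < E0 -> E0 * (1 - u0) < W < E0 -> 0 <= s <= 1 ->
  0 <= (E0 - W) * (1 - s^2) / E0 <= u0.
Proof.
  intros HE HW Hs.
  assert (0 <= 1 - s^2 <= 1) by nra.
  split.
  - apply Rmult_le_pos; [apply Rmult_le_pos; lra|]. apply Rlt_le, Rinv_0_lt_compat; lra.
  - apply (Rmult_le_reg_r E0); [lra|]. unfold Rdiv. rewrite Rmult_assoc, Rinv_l by lra. nra.
Qed.


Lemma repr_m (phi : R -> R) (n : nat) (b : nat -> R) (u0 E0 W : R) :
  Good phi n b u0 -> 0 < E0 -> E0 * (1 - u0) < W < E0 ->
  impint (fun E => Phi phi E0 E * Rpower (E^2/W^2 - 1) (-1/2)) W E0 = RInt (gm b n E0 W) 0 1.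
Proof.
  intros HG HE HW. pose proof HG as [Hu0 [Hu1 [Hr [Hphi [HA HQ]]]]].
  assert (HW0 : 0 < W) by nra.
  apply impint_unique; [lra|].
  apply subst_impint with (ft := fun E => Pt b n (1 - E/E0) / sqrt (E^2/W^2 - 1)).
  - lra.
  - intros E HEr. unfold Phi. rewrite Hphi.
    2:{ split.
        - assert (E / E0 < 1) by (apply (proj1 (Rdiv_lt_1 _ _ HE)); lra). lra.
        - assert (E0 * (1 - u0) < E) by lra.
          assert (1 - u0 < E / E0) by (apply (proj1 (Rlt_div_r _ _ _ HE)); lra). lra. }
    rewrite Rpower_mhalf. unfold Pt, Rdiv; ring.
    assert (W^2 < E^2) by nra.
    replace (E^2/W^2 - 1) with ((E^2 - W^2)/W^2) by (field; lra).
    apply Rdiv_lt_0_compat; [lra| apply pow_lt; lra].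
  - intros E HEr. apply exd_cont. unfold Pt.
    assert (Hpos : 0 < E * (E * 1) * / (W * (W * 1)) + - (1)).
    { replace (E * (E * 1) * / (W * (W * 1)) + - (1)) with ((E*E - W*W) / (W*W)) by (field; lra).
      apply Rdiv_lt_0_compat; nra. }
    auto_derive. repeat split.
    + apply (Q_exd phi n b u0); auto.
      assert (E / E0 <= 1) by (apply (proj1 (Rdiv_le_1 _ _ HE)); lra).
      assert (1 - u0 < E / E0) by (apply (proj1 (Rlt_div_r _ _ _ HE)); lra).
      rewrite Rabs_pos_eq; unfold Rdiv in *; lra.
    + exact Hpos.
    + apply Rgt_not_eq, sqrt_lt_R0; exact Hpos.
  - intros s Hs. apply exd_cont. unfold gm, Pt.
    pose proof (u_range E0 W s u0 HE HW Hs) as Hu.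
    assert (HL : 0 < E0 - W) by lra.
    assert (HD : 0 < 2 * W + (E0 - W) * (s * (s * 1))) by nra.
    auto_derive. repeat split.
    + apply (Q_exd phi n b u0); auto.
      replace ((E0 + - W) * (1 - s * (s * 1)) * / E0) with ((E0 - W) * (1 - s^2) / E0) by (unfold Rdiv; ring).
      rewrite Rabs_pos_eq; lra.
    + exact HD.
    + apply Rgt_not_eq, sqrt_lt_R0; exact HD.
  - intros s Hs. unfold gm.
    assert (HL : 0 < E0 - W) by lra.
    replace (1 - (W + (E0 - W) * s ^ 2) / E0) with ((E0 - W) * (1 - s^2) / E0) by (field; lra).
    rewrite sqrt_id by lra.
    assert (0 < sqrt (E0 - W)) by (apply sqrt_lt_R0; lra).
    assert (0 < sqrt (2 * W + (E0 - W) * s^2)) by (apply sqrt_lt_R0; nra).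
    replace (2 * (E0 - W)) with (2 * (sqrt (E0 - W) * sqrt (E0 - W))) by (rewrite sqrt_sqrt; lra).
    field. repeat split; lra.
Qed.

Lemma repr_p (phi : R -> R) (n : nat) (b : nat -> R) (u0 E0 W : R) :
  Good phi n b u0 -> 0 < E0 -> E0 * (1 - u0) < W < E0 ->
  impint (fun E => Phi phi E0 E * Rpower (E^2/W^2 - 1) (1/2)) W E0 = RInt (gp b n E0 W) 0 1.
Proof.
  intros HG HE HW. pose proof HG as [Hu0 [Hu1 [Hr [Hphi [HA HQ]]]]].
  assert (HW0 : 0 < W) by nra.
  apply impint_unique; [lra|].
  apply subst_impint with (ft := fun E => Pt b n (1 - E/E0) * sqrt (E^2/W^2 - 1)).
  - lra.
  - intros E HEr. unfold Phi. rewrite Hphi.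
    2:{ split.
        - assert (E / E0 < 1) by (apply (proj1 (Rdiv_lt_1 _ _ HE)); lra). lra.
        - assert (E0 * (1 - u0) < E) by lra.
          assert (1 - u0 < E / E0) by (apply (proj1 (Rlt_div_r _ _ _ HE)); lra). lra. }
    rewrite Rpower_half. unfold Pt, Rdiv; ring.
    assert (W^2 < E^2) by nra.
    replace (E^2/W^2 - 1) with ((E^2 - W^2)/W^2) by (field; lra).
    apply Rdiv_lt_0_compat; [lra| apply pow_lt; lra].
  - intros E HEr. apply exd_cont. unfold Pt.
    assert (Hpos : 0 < E * (E * 1) * / (W * (W * 1)) + - (1)).
    { replace (E * (E * 1) * / (W * (W * 1)) + - (1)) with ((E*E - W*W) / (W*W)) by (field; lra).
      apply Rdiv_lt_0_compat; nra. }
    auto_derive. repeat split.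
    + apply (Q_exd phi n b u0); auto.
      assert (E / E0 <= 1) by (apply (proj1 (Rdiv_le_1 _ _ HE)); lra).
      assert (1 - u0 < E / E0) by (apply (proj1 (Rlt_div_r _ _ _ HE)); lra).
      rewrite Rabs_pos_eq; unfold Rdiv in *; lra.
    + exact Hpos.
  - intros s Hs. apply exd_cont. unfold gp, Pt.
    pose proof (u_range E0 W s u0 HE HW Hs) as Hu.
    assert (HL : 0 < E0 - W) by lra.
    assert (HD : 0 < 2 * W + (E0 - W) * (s * (s * 1))) by nra.
    auto_derive. repeat split; try first [exact HD | exact HL | lra |
      (apply (Q_exd phi n b u0); [exact HG|];
       replace ((E0 + - W) * (1 - s * (s * 1)) * / E0) with ((E0 - W) * (1 - s^2) / E0) by (unfold Rdiv; ring);
       rewrite Rabs_pos_eq; lra)].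
  - intros s Hs. unfold gp.
    assert (HL : 0 < E0 - W) by lra.
    replace (1 - (W + (E0 - W) * s ^ 2) / E0) with ((E0 - W) * (1 - s^2) / E0) by (field; lra).
    rewrite sqrt_id by lra.
    field. lra.
Qed.


Lemma poly_int (F f : R -> R) (v : R) :
  (forall x, is_derive F x (f x)) -> (forall x, continuous f x) -> F 1 - F 0 = v ->
  is_RInt f 0 1 v.
Proof.
  intros HD HC Hv. rewrite <- Hv.
  apply (is_RInt_derive (V:=R_CompleteNormedModule) F f 0 1); intros; auto.
Qed.

Lemma JK (n : nat) : (n <= 3)%nat -> exists J K,
  is_RInt (fun s => (1 - s^2)^n) 0 1 J /\ is_RInt (fun s => s^2 * (1 - s^2)^n) 0 1 K /\
  0 < J /\ K * (2 * INR n + 3) = J.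
Proof.
  intros Hn.
  destruct n as [|[|[|[|n]]]]; [| | | |lia].
  - exists 1, (1/3). repeat split.
    + apply (poly_int (fun x => x)); [intros; auto_derive; auto; simpl; ring|
        intros; apply exd_cont; auto_derive; auto|simpl; ring].
    + apply (poly_int (fun x => x^3/3)); [intros; auto_derive; auto; simpl; field|
        intros; apply exd_cont; auto_derive; auto|simpl; field].
    + lra.
    + simpl. field.
  - exists (2/3), (2/15). repeat split.
    + apply (poly_int (fun x => x - x^3/3)); [intros; auto_derive; auto; simpl; field|
        intros; apply exd_cont; auto_derive; auto|simpl; field].
    + apply (poly_int (fun x => x^3/3 - x^5/5)); [intros; auto_derive; auto; simpl; field|
        intros; apply exd_cont; auto_derive; auto|simpl; field].
    + lra.
    + simpl. field.
  - exists (8/15), (8/105). repeat split.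
    + apply (poly_int (fun x => x - 2*x^3/3 + x^5/5)); [intros; auto_derive; auto; simpl; field|
        intros; apply exd_cont; auto_derive; auto|simpl; field].
    + apply (poly_int (fun x => x^3/3 - 2*x^5/5 + x^7/7)); [intros; auto_derive; auto; simpl; field|
        intros; apply exd_cont; auto_derive; auto|simpl; field].
    + lra.
    + simpl. field.
  - exists (16/35), (16/315). repeat split.
    + apply (poly_int (fun x => x - x^3 + 3*x^5/5 - x^7/7)); [intros; auto_derive; auto; simpl; field|
        intros; apply exd_cont; auto_derive; auto|simpl; field].
    + apply (poly_int (fun x => x^3/3 - 3*x^5/5 + 3*x^7/7 - x^9/9)); [intros; auto_derive; auto; simpl; field|
        intros; apply exd_cont; auto_derive; auto|simpl; field].
    + lra.
    + simpl. field.
Qed.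


Lemma Q_lo_hi (phi : R -> R) (n : nat) (b : nat -> R) (u0 u : R) :
  Good phi n b u0 -> Rabs u <= u0 ->
  (1 - epsQ) * PSeries b 0 <= PSeries b u <= (1 + epsQ) * PSeries b 0.
Proof.
  intros [_ [_ [_ [_ [HA HQ]]]]] Hu. destruct (HQ u Hu) as [H1 _].
  apply Rabs_le_between' in H1. lra.
Qed.

Lemma Pt_factor (b : nat -> R) (n : nat) (E0 W s : R) : 0 < E0 ->
  Pt b n ((E0-W)*(1-s^2)/E0) = ((E0-W)/E0)^n * (1-s^2)^n * PSeries b ((E0-W)*(1-s^2)/E0).
Proof.
  intros HE. unfold Pt. rewrite <- Rpow_mult_distr.
  replace ((E0 - W) / E0 * (1 - s ^ 2)) with ((E0-W)*(1-s^2)/E0) by (field; lra). reflexivity.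
Qed.

Lemma gm_lower (phi : R -> R) (n : nat) (b : nat -> R) (u0 E0 V s : R) :
  Good phi n b u0 -> 0 < E0 -> E0 * (1 - u0) < V < E0 -> 0 <= s <= 1 ->
  (((E0-V)/E0)^n * (1-epsQ) * PSeries b 0 * (2*V*sqrt(E0-V)/sqrt(2*V+(E0-V)))) * (1-s^2)^n
    <= gm b n E0 V s.
Proof.
  intros HG HE HV Hs. pose proof HG as [Hu0 [Hu1 [Hr [Hphi [HA HQ]]]]].
  assert (HV0 : 0 < V) by nra.
  pose proof (u_range E0 V s u0 HE HV Hs) as Hu.
  pose proof (Q_lo_hi phi n b u0 ((E0 - V) * (1 - s ^ 2) / E0) HG ltac:(rewrite Rabs_pos_eq; lra)) as [Hq1 Hq2].
  unfold gm. rewrite Pt_factor by lra.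
  assert (HLs : 0 <= (E0-V)*s^2 <= E0 - V).
  { assert (0 <= s^2 <= 1) by (split; [nra|]; replace 1 with (1^2) by ring; apply pow_incr; lra).
    split; [apply Rmult_le_pos; lra|]. pose proof (Rmult_le_compat_l (E0-V) _ _ ltac:(lra) (proj2 H)). lra. }
  assert (Hc0 : 0 <= ((E0-V)/E0)^n) by (apply pow_le; apply Rmult_le_pos; [lra|apply Rlt_le, Rinv_0_lt_compat; lra]).
  assert (Hp : 0 <= (1-s^2)^n) by (apply pow_le; nra).
  assert (HS : 0 < sqrt (E0 - V)) by (apply sqrt_lt_R0; lra).
  assert (HT : 0 < sqrt (2*V + (E0-V)*s^2)) by (apply sqrt_lt_R0; lra).
  assert (HT2 : sqrt (2*V + (E0-V)*s^2) <= sqrt (2*V+(E0-V))) by (apply sqrt_le_1_alt; lra).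
  assert (Hm : 2*V*sqrt(E0-V)/sqrt(2*V+(E0-V)) <= 2*V*sqrt(E0-V)/sqrt(2*V+(E0-V)*s^2)).
  { unfold Rdiv. apply Rmult_le_compat_l; [nra|]. apply Rinv_le_contravar; auto. }
  assert (Hm0 : 0 <= 2*V*sqrt(E0-V)/sqrt(2*V+(E0-V))).
  { apply Rlt_le, Rdiv_lt_0_compat; [nra|]. apply sqrt_lt_R0; lra. }
  assert (HeA : 0 <= (1 - epsQ) * PSeries b 0) by (unfold epsQ; nra).
  match goal with |- _ <= _ * ?M => set (m := M) in * end.
  set (q := PSeries b ((E0 - V) * (1 - s ^ 2) / E0)) in *.
  set (m0 := 2*V*sqrt(E0-V)/sqrt(2*V+(E0-V))) in *.
  set (c0 := ((E0-V)/E0)^n) in *. set (p := (1-s^2)^n) in *.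
  replace (c0 * (1 - epsQ) * PSeries b 0 * m0 * p) with ((c0 * p) * (((1 - epsQ) * PSeries b 0) * m0)) by ring.
  replace (c0 * p * q * m) with ((c0 * p) * (q * m)) by ring.
  apply Rmult_le_compat_l; [apply Rmult_le_pos; auto|].
  apply Rmult_le_compat; auto.
Qed.

Lemma gp_bounds (phi : R -> R) (n : nat) (b : nat -> R) (u0 E0 V s : R) :
  Good phi n b u0 -> 0 < E0 -> E0 * (1 - u0) < V < E0 -> 0 <= s <= 1 ->
  0 <= gp b n E0 V s <=
  (((E0-V)/E0)^n * (1+epsQ) * PSeries b 0 * (2*(E0-V)*sqrt(E0-V)*sqrt(2*V+(E0-V))/V)) * (s^2*(1-s^2)^n).
Proof.
  intros HG HE HV Hs. pose proof HG as [Hu0 [Hu1 [Hr [Hphi [HA HQ]]]]].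
  assert (HV0 : 0 < V) by nra.
  pose proof (u_range E0 V s u0 HE HV Hs) as Hu.
  pose proof (Q_lo_hi phi n b u0 ((E0 - V) * (1 - s ^ 2) / E0) HG ltac:(rewrite Rabs_pos_eq; lra)) as [Hq1 Hq2].
  unfold gp. rewrite Pt_factor by lra.
  assert (HLs : 0 <= (E0-V)*s^2 <= E0 - V).
  { assert (0 <= s^2 <= 1) by (split; [nra|]; replace 1 with (1^2) by ring; apply pow_incr; lra).
    split; [apply Rmult_le_pos; lra|]. pose proof (Rmult_le_compat_l (E0-V) _ _ ltac:(lra) (proj2 H)). lra. }
  assert (Hc0 : 0 <= ((E0-V)/E0)^n) by (apply pow_le; apply Rmult_le_pos; [lra|apply Rlt_le, Rinv_0_lt_compat; lra]).
  assert (Hp : 0 <= (1-s^2)^n) by (apply pow_le; nra).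
  assert (HS : 0 < sqrt (E0 - V)) by (apply sqrt_lt_R0; lra).
  assert (HT : 0 <= sqrt (2*V + (E0-V)*s^2)) by apply sqrt_pos.
  assert (HT2 : sqrt (2*V + (E0-V)*s^2) <= sqrt (2*V+(E0-V))) by (apply sqrt_le_1_alt; lra).
  assert (Hs2 : 0 <= s^2) by nra.
  assert (Hm : 2*(E0-V)*sqrt(E0-V)*s^2*sqrt(2*V+(E0-V)*s^2)/V <= 2*(E0-V)*sqrt(E0-V)*sqrt(2*V+(E0-V))/V * s^2).
  { unfold Rdiv. 
    replace (2 * (E0 - V) * sqrt (E0 - V) * s ^ 2 * sqrt (2 * V + (E0 - V) * s ^ 2) * / V)
      with ((2 * (E0 - V) * sqrt (E0 - V) * s^2 * / V) * sqrt (2 * V + (E0 - V) * s ^ 2)) by ring.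
    replace (2 * (E0 - V) * sqrt (E0 - V) * sqrt (2 * V + (E0 - V)) * / V * s ^ 2)
      with ((2 * (E0 - V) * sqrt (E0 - V) * s^2 * / V) * sqrt (2 * V + (E0 - V))) by ring.
    apply Rmult_le_compat_l; auto.
    apply Rmult_le_pos; [|apply Rlt_le, Rinv_0_lt_compat; lra].
    apply Rmult_le_pos; auto. apply Rmult_le_pos; lra. }
  assert (Hm0 : 0 <= 2*(E0-V)*sqrt(E0-V)*s^2*sqrt(2*V+(E0-V)*s^2)/V).
  { apply Rmult_le_pos; [|apply Rlt_le, Rinv_0_lt_compat; lra].
    apply Rmult_le_pos; auto. apply Rmult_le_pos; auto. apply Rmult_le_pos; lra. }
  assert (Hq0 : 0 <= PSeries b ((E0 - V) * (1 - s ^ 2) / E0)) by (unfold epsQ in *; nra).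
  match goal with |- _ <= _ * ?M <= _ => set (m := M) in * end.
  set (q := PSeries b ((E0 - V) * (1 - s ^ 2) / E0)) in *.
  set (m0 := 2*(E0-V)*sqrt(E0-V)*sqrt(2*V+(E0-V))/V) in *.
  set (c0 := ((E0-V)/E0)^n) in *. set (p := (1-s^2)^n) in *.
  split.
  - apply Rmult_le_pos; [apply Rmult_le_pos; [apply Rmult_le_pos|]|]; auto.
  - replace (c0 * (1 + epsQ) * PSeries b 0 * m0 * (s^2 * p)) with ((c0 * p) * (((1 + epsQ) * PSeries b 0) * (m0 * s^2))) by ring.
    replace (c0 * p * q * m) with ((c0 * p) * (q * m)) by ring.
    apply Rmult_le_compat_l; [apply Rmult_le_pos; auto|].
    apply Rmult_le_compat; auto.
Qed.


Definition Ptd (b : nat -> R) (n : nat) (u : R) :=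
  INR n * u^(pred n) * PSeries b u + u^n * PSeries (PS_derive b) u.
Definition mm (E0 W s : R) := 2*W*sqrt(E0-W)/sqrt(2*W+(E0-W)*s^2).
Definition Lam (E0 W s : R) := 1/W - 1/(2*(E0-W)) - (2-s^2)/(2*(2*W+(E0-W)*s^2)).
Definition dgm (b : nat -> R) (n : nat) (E0 W s : R) :=
  - ((1-s^2)/E0) * Ptd b n ((E0-W)*(1-s^2)/E0) * mm E0 W s
  + Pt b n ((E0-W)*(1-s^2)/E0) * (mm E0 W s * Lam E0 W s).

Lemma Ptd_id (b : nat -> R) (n : nat) (u : R) :
  u * Ptd b n u = u^n * (INR n * PSeries b u + u * PSeries (PS_derive b) u).
Proof. unfold Ptd. destruct n; simpl; ring. Qed.

Lemma Pt_derive (phi : R -> R) (n : nat) (b : nat -> R) (u0 u : R) :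
  Good phi n b u0 -> Rabs u <= u0 -> is_derive (Pt b n) u (Ptd b n u).
Proof.
  intros HG Hu. pose proof HG as [_ [_ [Hr _]]].
  change (Pt b n) with (fun x => x^n * PSeries b x). auto_derive.
  - apply (ex_derive_PSeries b u). apply Hr; auto.
  - replace (Derive (fun x => PSeries b x) u) with (PSeries (PS_derive b) u).
    + unfold Ptd. ring.
    + symmetry. apply (Derive_PSeries b u). apply Hr; auto.
Qed.

Lemma mm_derive (E0 W s : R) : 0 < W < E0 -> 0 <= s <= 1 ->
  is_derive (fun w => mm E0 w s) W (mm E0 W s * Lam E0 W s).
Proof.
  intros HW Hs. unfold mm.
  assert (HL : 0 < E0 - W) by lra.
  assert (HD : 0 < 2 * W + (E0 - W) * (s * (s * 1))) by nra.
  auto_derive.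
  - repeat split; try lra; try exact HD; apply Rgt_not_eq, sqrt_lt_R0; exact HD.
  - unfold Lam.
    replace (E0 + - W) with (E0 - W) by ring.
    replace (s * (s * 1)) with (s^2) by ring.
    assert (HD' : 0 < 2 * W + (E0 - W) * s^2) by (replace (s^2) with (s*(s*1)) by ring; exact HD).
    assert (HS := sqrt_lt_R0 _ HL). assert (HT := sqrt_lt_R0 _ HD').
    assert (HS2 := sqrt_sqrt _ (Rlt_le _ _ HL)). assert (HT2 := sqrt_sqrt _ (Rlt_le _ _ HD')).
    set (S := sqrt (E0 - W)) in *. set (T := sqrt (2 * W + (E0 - W) * s^2)) in *.
    clearbody S T.
    rewrite <- HT2. rewrite <- HS2.
    field. repeat split; lra.
Qed.

Lemma dgm_is (phi : R -> R) (n : nat) (b : nat -> R) (u0 E0 s W : R) :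
  Good phi n b u0 -> 0 < E0 -> E0 * (1 - u0) < W < E0 -> 0 <= s <= 1 ->
  is_derive (fun w => gm b n E0 w s) W (dgm b n E0 W s).
Proof.
  intros HG HE HW Hs.
  assert (HW0 : 0 < W) by (destruct HG as [_ [Hu1 _]]; nra).
  pose proof (u_range E0 W s u0 HE HW Hs) as Hu.
  assert (H1 : is_derive (fun w => Pt b n ((E0-w)*(1-s^2)/E0)) W (- ((1-s^2)/E0) * Ptd b n ((E0-W)*(1-s^2)/E0))).
  { pose proof (is_derive_comp (Pt b n) (fun w => (E0-w)*(1-s^2)/E0) W
       (Ptd b n ((E0-W)*(1-s^2)/E0)) (- ((1-s^2)/E0))) as Hc.
    apply Hc.
    - apply (Pt_derive phi n b u0); auto. cbv beta. rewrite Rabs_pos_eq; lra.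
    - auto_derive; [auto|field; lra]. }
  pose proof (mm_derive E0 W s ltac:(lra) Hs) as H2.
  pose proof (is_derive_mult _ _ W _ _ H1 H2 ltac:(intros; apply Rmult_comm)) as H3.
  refine (is_derive_ext _ _ _ _ _ H3). intros t. reflexivity.
Qed.

Lemma sq_le (x y : R) : 0 <= x -> 0 <= y -> y * y <= x * x -> y <= x.
Proof. intros Hx Hy H. destruct (Rle_or_lt y x) as [h|h]; [exact h|]. nra. Qed.

Definition Bk (n : nat) (u0 : R) := INR n * (1 + epsQ) + epsQ + (1 + epsQ) * (1/2 + 3 * u0).

Lemma dgm_eq (b : nat -> R) (n : nat) (E0 W s : R) : 0 < E0 -> W < E0 ->
  let u := (E0 - W) * (1 - s^2) / E0 in
  dgm b n E0 W s = (mm E0 W s / (E0 - W)) * u^n *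
     (- (INR n * PSeries b u + u * PSeries (PS_derive b) u) + PSeries b u * (Lam E0 W s * (E0 - W))).
Proof.
  intros HE HW u. unfold dgm. fold u.
  replace ((1 - s^2) / E0) with (u / (E0 - W)) by (unfold u; field; lra).
  replace (- (u / (E0 - W)) * Ptd b n u * mm E0 W s) with (- (u * Ptd b n u) * mm E0 W s / (E0 - W))
    by (field; lra).
  rewrite Ptd_id. unfold Pt. field. lra.
Qed.

Lemma mmL_bound (E0 V W s : R) : 0 < V -> V <= W -> W < E0 ->
  (1 - epsQ) * (E0 - V) <= E0 - W -> 0 <= s <= 1 ->
  0 <= mm E0 W s / (E0 - W) <= sqrt (2 * E0) / ((1 - epsQ) * sqrt (E0 - V)).
Proof.
  intros HV HVW HW HL Hs. unfold epsQ in *.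
  assert (HL' : 0 < E0 - W) by lra.
  assert (HD : 0 < 2 * W + (E0 - W) * s^2) by (assert (0 <= (E0-W)*s^2) by (apply Rmult_le_pos; nra); lra).
  assert (HS' := sqrt_lt_R0 _ HL'). assert (HT := sqrt_lt_R0 _ HD).
  assert (HS := sqrt_lt_R0 (E0 - V) ltac:(lra)).
  assert (HS'2 := sqrt_sqrt _ (Rlt_le _ _ HL')). assert (HT2 := sqrt_sqrt _ (Rlt_le _ _ HD)).
  assert (HS2 := sqrt_sqrt (E0 - V) ltac:(lra)).
  assert (HW2 := sqrt_sqrt (2 * W) ltac:(lra)). assert (HW2p := sqrt_lt_R0 (2 * W) ltac:(lra)).
  assert (HE2 := sqrt_sqrt (2 * E0) ltac:(lra)). assert (HE2p := sqrt_lt_R0 (2 * E0) ltac:(lra)).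
  unfold mm.
  set (S' := sqrt (E0 - W)) in *. set (T := sqrt (2 * W + (E0 - W) * s^2)) in *.
  assert (E1 : 2 * W * S' / T / (E0 - W) = 2 * W / (S' * T)).
  { rewrite <- HS'2. field. lra. }
  rewrite E1.
  set (S := sqrt (E0 - V)) in *. set (R2 := sqrt (2 * W)) in *. set (E2 := sqrt (2 * E0)) in *.
  assert (HTR : R2 <= T).
  { apply sq_le; [lra|lra|]. rewrite HT2, HW2. assert (0 <= (E0-W)*s^2) by (apply Rmult_le_pos; nra). lra. }
  assert (HRE : R2 <= E2) by (apply sq_le; lra).
  assert (HSS : (1 - /1000) * S <= S').
  { apply sq_le; [lra|lra|]. rewrite HS'2.
    replace ((1 - /1000) * S * ((1 - /1000) * S)) with ((1 - /1000) * (1 - /1000) * (S * S)) by ring.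
    rewrite HS2. nra. }
  split.
  - apply Rlt_le, Rdiv_lt_0_compat; [lra|]. apply Rmult_lt_0_compat; lra.
  - apply (Rmult_le_reg_r (S' * T * ((1 - /1000) * S))).
    { apply Rmult_lt_0_compat; [apply Rmult_lt_0_compat|]; lra. }
    replace (2 * W / (S' * T) * (S' * T * ((1 - / 1000) * S))) with (2 * W * ((1 - /1000) * S)) by (field; lra).
    replace (E2 / ((1 - / 1000) * S) * (S' * T * ((1 - / 1000) * S))) with (E2 * S' * T) by (field; lra).
    replace (2 * W) with (R2 * R2) by auto.
    assert (R2 * R2 <= E2 * T) by (apply Rmult_le_compat; lra).
    assert (R2 * R2 * ((1 - / 1000) * S) <= E2 * T * S') by (apply Rmult_le_compat; nra).
    lra.
Qed.

Lemma dgm_bound (phi : R -> R) (n : nat) (b : nat -> R) (u0 E0 V W s : R) :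
  Good phi n b u0 -> 0 < E0 -> E0 * (1 - u0) < V < E0 -> V <= W ->
  (1 - epsQ) * (E0 - V) <= E0 - W -> 0 <= s <= 1 ->
  Rabs (dgm b n E0 W s) <=
  (((E0-V)/E0)^n * PSeries b 0 * (sqrt (2 * E0) / ((1 - epsQ) * sqrt (E0 - V))) * Bk n u0) * (1-s^2)^n.
Proof.
  intros HG HE HV HVW HL Hs. pose proof HG as [Hu0 [Hu1 [Hr [Hphi [HA HQ]]]]].
  assert (HV0 : 0 < V) by nra.
  assert (HWE : W < E0) by (unfold epsQ in *; nra).
  assert (HWr : E0 * (1 - u0) < W < E0) by lra.
  rewrite (dgm_eq b n E0 W s HE HWE).
  set (u := (E0 - W) * (1 - s^2) / E0).
  pose proof (u_range E0 W s u0 HE HWr Hs) as Hu. fold u in Hu.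
  assert (Hau : Rabs u <= u0) by (rewrite Rabs_pos_eq; lra).
  pose proof (Q_lo_hi phi n b u0 u HG Hau) as [Hq1 Hq2].
  destruct (HQ u Hau) as [_ Hqd].
  pose proof (mmL_bound E0 V W s HV0 HVW HWE HL Hs) as [Hm0 Hm1].
  assert (HX0 : 0 <= u^n) by (apply pow_le; lra).
  assert (HX1 : u^n <= ((E0-V)/E0)^n * (1-s^2)^n).
  { rewrite <- Rpow_mult_distr. apply pow_incr. split; [lra|].
    unfold u. assert (0 <= 1 - s^2) by nra.
    replace ((E0 - V) / E0 * (1 - s ^ 2)) with ((E0 - V) * (1 - s^2) / E0) by (field; lra).
    unfold Rdiv. apply Rmult_le_compat_r; [apply Rlt_le, Rinv_0_lt_compat; lra|].
    apply Rmult_le_compat_r; lra. }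
  assert (HLam : Rabs (Lam E0 W s * (E0 - W)) <= 1/2 + 3 * u0).
  { unfold Lam.
    assert (HD : 2 * W <= 2 * W + (E0 - W) * s^2) by (assert (0 <= (E0-W)*s^2) by (apply Rmult_le_pos; nra); lra).
    assert (HLW : (E0 - W) / W <= 2 * u0).
    { apply (proj2 (Rle_div_l (E0 - W) (2 * u0) W ltac:(lra))).
      assert (K1 : E0 - W < u0 * E0) by lra.
      assert (K2 : E0 / 2 <= W) by nra.
      assert (K3 : u0 * (E0/2) <= u0 * W) by (apply Rmult_le_compat_l; lra).
      lra. }
    assert (HT0 : 0 <= (2 - s^2) / (2 * (2 * W + (E0 - W) * s^2)) * (E0 - W)).
    { apply Rmult_le_pos; [|lra]. apply Rmult_le_pos; [nra|]. apply Rlt_le, Rinv_0_lt_compat. lra. }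
    assert (HT1 : (2 - s^2) / (2 * (2 * W + (E0 - W) * s^2)) * (E0 - W) <= (E0 - W) / W).
    { assert (I1 : / (2 * (2 * W + (E0 - W) * s^2)) <= / (2 * (2 * W))) by (apply Rinv_le_contravar; lra).
      assert (I0 : 0 <= / (2 * (2 * W + (E0 - W) * s^2))) by (apply Rlt_le, Rinv_0_lt_compat; lra).
      assert (I2 : (2 - s^2) * / (2 * (2 * W + (E0 - W) * s^2)) <= 2 * / (2 * (2 * W)))
        by (apply Rmult_le_compat; nra).
      replace (2 * / (2 * (2 * W))) with (/ W * / 2) in I2 by (field; lra).
      assert (I3 : 0 < / W) by (apply Rinv_0_lt_compat; lra).
      unfold Rdiv. rewrite (Rmult_comm (E0 - W) (/ W)).
      apply Rmult_le_compat_r; [lra|]. lra. }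
    replace ((1 / W - 1 / (2 * (E0 - W)) - (2 - s ^ 2) / (2 * (2 * W + (E0 - W) * s ^ 2))) * (E0 - W))
      with ((E0 - W) / W - 1/2 - (2 - s^2) / (2 * (2 * W + (E0 - W) * s^2)) * (E0 - W)) by (field; lra).
    assert (0 <= (E0 - W) / W) by (apply Rmult_le_pos; [lra|apply Rlt_le, Rinv_0_lt_compat; lra]).
    apply Rabs_le. lra. }
  set (q := PSeries b u) in *. set (qd := u * PSeries (PS_derive b) u) in *.
  set (Lm := Lam E0 W s * (E0 - W)) in *.
  set (A := PSeries b 0) in *.
  assert (Hq0 : 0 <= q) by (unfold epsQ in *; nra).
  assert (Hin : Rabs (- (INR n * q + qd) + q * Lm) <= A * Bk n u0).
  { assert (Hn : 0 <= INR n) by apply pos_INR.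
    eapply Rle_trans; [apply Rabs_triang|]. rewrite Rabs_Ropp, Rabs_mult, (Rabs_pos_eq q) by auto.
    eapply Rle_trans; [apply Rplus_le_compat_r, Rabs_triang|].
    rewrite Rabs_mult, (Rabs_pos_eq (INR n)), (Rabs_pos_eq q) by auto.
    unfold Bk.
    assert (INR n * q <= INR n * ((1 + epsQ) * A)) by (apply Rmult_le_compat_l; auto).
    assert (q * Rabs Lm <= ((1 + epsQ) * A) * (1/2 + 3*u0)) by (apply Rmult_le_compat; auto; apply Rabs_pos).
    nra. }
  rewrite !Rabs_mult, (Rabs_pos_eq (mm E0 W s / (E0 - W))), (Rabs_pos_eq (u^n)) by auto.
  set (C := sqrt (2 * E0) / ((1 - epsQ) * sqrt (E0 - V))) in *.
  set (c0 := ((E0 - V) / E0)^n) in *. set (p := (1 - s^2)^n) in *.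
  replace (c0 * A * C * Bk n u0 * p) with (C * (c0 * p) * (A * Bk n u0)) by ring.
  apply Rmult_le_compat; auto.
  - apply Rmult_le_pos; auto.
  - apply Rabs_pos.
  - apply Rmult_le_compat; auto.
Qed.


Lemma gm_cont (phi : R -> R) (n : nat) (b : nat -> R) (u0 E0 W s : R) :
  Good phi n b u0 -> 0 < E0 -> E0 * (1 - u0) < W < E0 -> 0 <= s <= 1 ->
  continuous (gm b n E0 W) s.
Proof.
  intros HG HE HW Hs. pose proof HG as [Hu0 [Hu1 _]].
  assert (HW0 : 0 < W) by nra.
  apply exd_cont. unfold gm, Pt.
  pose proof (u_range E0 W s u0 HE HW Hs) as Hu.
  assert (HL : 0 < E0 - W) by lra.
  assert (HD : 0 < 2 * W + (E0 - W) * (s * (s * 1))) by nra.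
  auto_derive. repeat split.
  + apply (Q_exd phi n b u0); auto.
    replace ((E0 + - W) * (1 - s * (s * 1)) * / E0) with ((E0 - W) * (1 - s^2) / E0) by (unfold Rdiv; ring).
    rewrite Rabs_pos_eq; lra.
  + exact HD.
  + apply Rgt_not_eq, sqrt_lt_R0; exact HD.
Qed.

Lemma gp_cont (phi : R -> R) (n : nat) (b : nat -> R) (u0 E0 W s : R) :
  Good phi n b u0 -> 0 < E0 -> E0 * (1 - u0) < W < E0 -> 0 <= s <= 1 ->
  continuous (gp b n E0 W) s.
Proof.
  intros HG HE HW Hs. pose proof HG as [Hu0 [Hu1 _]].
  assert (HW0 : 0 < W) by nra.
  apply exd_cont. unfold gp, Pt.
  pose proof (u_range E0 W s u0 HE HW Hs) as Hu.
  assert (HL : 0 < E0 - W) by lra.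
  assert (HD : 0 < 2 * W + (E0 - W) * (s * (s * 1))) by nra.
  auto_derive. repeat split; try first [exact HD | exact HL | lra |
      (apply (Q_exd phi n b u0); [exact HG|];
       replace ((E0 + - W) * (1 - s * (s * 1)) * / E0) with ((E0 - W) * (1 - s^2) / E0) by (unfold Rdiv; ring);
       rewrite Rabs_pos_eq; lra)].
Qed.

Lemma ex_RInt_cont01 (f : R -> R) : (forall s, 0 <= s <= 1 -> continuous f s) -> ex_RInt f 0 1.
Proof.
  intros H. apply (ex_RInt_continuous (V:=R_CompleteNormedModule)). intros z Hz.
  rewrite Rmin_left in Hz by lra. rewrite Rmax_right in Hz by lra. apply H; lra.
Qed.

Lemma RInt_abs_le (f g : R -> R) : ex_RInt f 0 1 -> ex_RInt g 0 1 ->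
  (forall s, 0 < s < 1 -> Rabs (f s) <= g s) -> Rabs (RInt f 0 1) <= RInt g 0 1.
Proof.
  intros Hf Hg H.
  assert (H1 : RInt f 0 1 <= RInt g 0 1).
  { apply RInt_le; auto; [lra|]. intros x Hx. pose proof (H x Hx). pose proof (Rle_abs (f x)). lra. }
  assert (H2 : RInt (fun s => - g s) 0 1 <= RInt f 0 1).
  { apply RInt_le; auto; [lra| |].
    - apply (ex_RInt_opp (V:=R_NormedModule)) in Hg. exact Hg.
    - intros x Hx. pose proof (H x Hx) as K1. pose proof (Rle_abs (- f x)) as K2. rewrite Rabs_Ropp in K2. lra. }
  rewrite (RInt_opp (V:=R_CompleteNormedModule)) in H2 by auto. unfold opp in H2; simpl in H2.
  apply Rabs_le. lra.
Qed.

Definition Fm (phi : R -> R) (E0 W : R) :=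
  impint (fun E => Phi phi E0 E * Rpower (E^2/W^2 - 1) (-1/2)) W E0.

Lemma dq_bound (phi : R -> R) (n : nat) (b : nat -> R) (u0 E0 V J : R) :
  Good phi n b u0 -> 0 < E0 -> E0 * (1 - u0) < V < E0 ->
  is_RInt (fun s => (1 - s^2)^n) 0 1 J ->
  forall t, 0 < t < epsQ * (E0 - V) ->
  Rabs ((Fm phi E0 (V + t) - Fm phi E0 V) / t) <=
  (((E0-V)/E0)^n * PSeries b 0 * (sqrt (2 * E0) / ((1 - epsQ) * sqrt (E0 - V))) * Bk n u0) * J.
Proof.
  intros HG HE HV HJ t Ht. pose proof HG as [Hu0 [Hu1 _]].
  assert (HVt : E0 * (1 - u0) < V + t < E0) by (unfold epsQ in *; lra).
  unfold Fm. rewrite (repr_m phi n b u0 E0 (V + t)), (repr_m phi n b u0 E0 V) by auto.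
  set (C := ((E0-V)/E0)^n * PSeries b 0 * (sqrt (2 * E0) / ((1 - epsQ) * sqrt (E0 - V))) * Bk n u0).
  assert (Ex1 : ex_RInt (gm b n E0 (V + t)) 0 1) by (apply ex_RInt_cont01; intros; apply (gm_cont phi n b u0); auto).
  assert (Ex2 : ex_RInt (gm b n E0 V) 0 1) by (apply ex_RInt_cont01; intros; apply (gm_cont phi n b u0); auto).
  assert (Eq1 : (RInt (gm b n E0 (V + t)) 0 1 - RInt (gm b n E0 V) 0 1) / t =
                RInt (fun s => / t * (gm b n E0 (V + t) s - gm b n E0 V s)) 0 1).
  { rewrite (RInt_scal (V:=R_CompleteNormedModule)).
    - rewrite (RInt_minus (V:=R_CompleteNormedModule)) by auto.
      unfold scal, minus, plus, opp; simpl. unfold mult; simpl. field. lra.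
    - apply (ex_RInt_minus (V:=R_NormedModule)); auto. }
  rewrite Eq1.
  assert (HCJ : is_RInt (fun s => C * (1 - s^2)^n) 0 1 (C * J)).
  { apply (is_RInt_scal (V:=R_NormedModule)) with (k := C) in HJ. exact HJ. }
  rewrite <- (is_RInt_unique _ _ _ _ HCJ).
  apply RInt_abs_le.
  - apply (ex_RInt_scal (V:=R_NormedModule)). apply (ex_RInt_minus (V:=R_NormedModule)); auto.
  - eexists; exact HCJ.
  - intros s Hs.
    destruct (MVT_abs (fun w => gm b n E0 w s) (fun w => dgm b n E0 w s) V (V + t)) as [c [Hc1 Hc2]].
    { intros c Hc. rewrite Rmin_left in Hc by lra. rewrite Rmax_right in Hc by lra.
      apply is_derive_Reals. apply (dgm_is phi n b u0); auto; [lra|lra]. }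
    rewrite Rmin_left in Hc2 by lra. rewrite Rmax_right in Hc2 by lra.
    rewrite Rabs_mult, Rabs_Rinv by lra. rewrite Hc1.
    replace (V + t - V) with t by ring. rewrite (Rabs_pos_eq t) by lra.
    replace (/ t * (Rabs (dgm b n E0 c s) * t)) with (Rabs (dgm b n E0 c s)) by (field; lra).
    apply (dgm_bound phi n b u0 E0 V c s); auto; try lra.
Qed.


Lemma bracket (x V E0 T E2 u0 K : R) : 0 <= x <= 3 -> 0 < u0 <= /1000 -> 0 < E0 ->
  E0 * (1 - u0) < V < E0 -> 0 < T -> T * T = V + E0 -> 0 < E2 -> E2 * E2 = 2 * E0 -> 0 < K ->
  (1+epsQ)*2*T*E2*(x*(1+epsQ)+epsQ+(1+epsQ)*(1/2+3*u0))*K/(1-epsQ)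
   < (4/5)*(1-epsQ)^2*4*(V*V)*(K*(2*x+3))/(T*T).
Proof.
  intros Hx Hu HE HV HT HT2 HE2 HE22 HK. unfold epsQ.
  set (Bk := x*(1+/1000)+/1000+(1+/1000)*(1/2+3*u0)).
  assert (HB : 0 < Bk <= 1.001 * x + 0.5046) by (unfold Bk; lra).
  assert (HTE : T <= E2) by (apply sq_le; lra).
  assert (HT3 : T * T * T * E2 <= 4 * (E0 * E0)).
  { assert (T * T <= E2 * E2) by (apply Rmult_le_compat; lra).
    assert (T * T * T * E2 <= E2 * E2 * E2 * E2).
    { apply Rmult_le_compat; try lra. - apply Rmult_le_pos; nra. - apply Rmult_le_compat; nra. }
    nra. }
  assert (HV2 : E0 * E0 * (0.998001) <= V * V).
  { assert (E0 * 0.999 <= V) by nra. nra. }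
  apply (Rmult_lt_reg_r (T * T * (1 - /1000) / K)).
  { apply Rmult_lt_0_compat; [|apply Rinv_0_lt_compat; lra]. apply Rmult_lt_0_compat; nra. }
  replace ((1 + / 1000) * 2 * T * E2 * Bk * K / (1 - / 1000) * (T * T * (1 - / 1000) / K))
    with ((1 + /1000) * 2 * Bk * (T * T * T * E2)) by (field; lra).
  replace (4 / 5 * (1 - / 1000) ^ 2 * 4 * (V * V) * (K * (2 * x + 3)) / (T * T) * (T * T * (1 - / 1000) / K))
    with (16/5 * (1 - /1000)^3 * (V * V) * (2 * x + 3)) by (field; nra).
  assert (L1 : (1 + /1000) * 2 * Bk * (T * T * T * E2) <= (1 + /1000) * 2 * Bk * (4 * (E0 * E0))).
  { apply Rmult_le_compat_l; [lra|exact HT3]. }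
  assert (L2 : 16/5 * (1 - /1000)^3 * (E0 * E0 * 0.998001) * (2 * x + 3) <= 16/5 * (1 - /1000)^3 * (V * V) * (2 * x + 3)).
  { apply Rmult_le_compat_r; [lra|]. apply Rmult_le_compat_l; [lra|exact HV2]. }
  assert (L3 : (1 + /1000) * 2 * Bk * (4 * (E0 * E0)) < 16/5 * (1 - /1000)^3 * (E0 * E0 * 0.998001) * (2 * x + 3)).
  { assert (HE0 : 0 < E0 * E0) by nra.
    replace ((1 + /1000) * 2 * Bk * (4 * (E0 * E0))) with ((E0 * E0) * ((1 + /1000) * 8 * Bk)) by ring.
    replace (16/5 * (1 - /1000)^3 * (E0 * E0 * 0.998001) * (2 * x + 3))
      with ((E0 * E0) * (16/5 * (1 - /1000)^3 * 0.998001 * (2 * x + 3))) by ring.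
    apply Rmult_lt_compat_l; [exact HE0|]. simpl. lra. }
  lra.
Qed.


Theorem mainTheorem8 (E0 : R) (phi : R -> R) (n : nat) :
  0 < E0 -> standing_assumptions phi n -> (n <= 3)%nat ->
  exists delta, 0 < delta /\
    forall V, E0 - delta < V < E0 ->
      Rabs (xi phi E0 (1/2) V / xi phi E0 (-1/2) V *
            (zeta phi E0 V / xi phi E0 (-1/2) V)) < 4 / 5.
Proof.
  intros HE Hs Hn.
  destruct (good_exists phi n Hs) as [b [u0 HG]].
  pose proof HG as [Hu0 [Hu1 [Hr [Hphi [HA HQ]]]]].
  destruct (JK n Hn) as [J [K [HJ [HK [HJp HKJ]]]]].
  exists (E0 * u0). split; [nra|].
  intros V HV. assert (HV' : E0*(1-u0) < V < E0) by lra.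
  assert (HV0 : 0 < V) by nra.
  unfold xi, zeta.
  rewrite (repr_p phi n b u0 E0 V HG HE HV'), (repr_m phi n b u0 E0 V HG HE HV').
  change (fun W => impint (fun E => Phi phi E0 E * Rpower (E^2/W^2-1) (-1/2)) W E0) with (Fm phi E0).
  set (Ip := RInt (gp b n E0 V) 0 1). set (Im := RInt (gm b n E0 V) 0 1).
  set (d := deriv (Fm phi E0) V).
  set (A := PSeries b 0) in *.
  set (c0 := ((E0-V)/E0)^n).
  assert (Hc0 : 0 < c0) by (apply pow_lt; apply Rdiv_lt_0_compat; lra).
  set (S := sqrt (E0 - V)). set (T := sqrt (2 * V + (E0 - V))). set (E2 := sqrt (2 * E0)).
  assert (HS : 0 < S) by (apply sqrt_lt_R0; lra).
  assert (HT : 0 < T) by (apply sqrt_lt_R0; lra).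
  assert (HE2 : 0 < E2) by (apply sqrt_lt_R0; lra).
  assert (HS2 : S * S = E0 - V) by (apply sqrt_sqrt; lra).
  assert (HT2 : T * T = V + E0) by (unfold T; rewrite sqrt_sqrt; lra).
  assert (HE22 : E2 * E2 = 2 * E0) by (apply sqrt_sqrt; lra).
  set (Cp := c0 * (1 + epsQ) * A * (2 * (E0 - V) * S * T / V)).
  set (Cz := c0 * A * (E2 / ((1 - epsQ) * S)) * Bk n u0).
  set (Cm := c0 * (1 - epsQ) * A * (2 * V * S / T)).
  assert (HexP : ex_RInt (gp b n E0 V) 0 1) by (apply ex_RInt_cont01; intros; apply (gp_cont phi n b u0); auto).
  assert (HexM : ex_RInt (gm b n E0 V) 0 1) by (apply ex_RInt_cont01; intros; apply (gm_cont phi n b u0); auto).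
  assert (HIp0 : 0 <= Ip).
  { unfold Ip. apply Rle_trans with (RInt (fun _ => 0) 0 1).
    - right. rewrite RInt_const. unfold scal; simpl; unfold mult; simpl. ring.
    - apply RInt_le; auto; [lra|apply ex_RInt_const|]. intros x Hx.
      apply (gp_bounds phi n b u0 E0 V x); auto; lra. }
  assert (HIp1 : Ip <= Cp * K).
  { assert (HCK : is_RInt (fun s => Cp * (s^2 * (1 - s^2)^n)) 0 1 (Cp * K)).
    { apply (is_RInt_scal (V:=R_NormedModule)) with (k := Cp) in HK. exact HK. }
    rewrite <- (is_RInt_unique _ _ _ _ HCK). unfold Ip.
    apply RInt_le; auto; [lra|eexists; exact HCK|]. intros x Hx.
    apply (gp_bounds phi n b u0 E0 V x); auto; lra. }
  assert (HIm : Cm * J <= Im).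
  { assert (HCJ : is_RInt (fun s => Cm * (1 - s^2)^n) 0 1 (Cm * J)).
    { apply (is_RInt_scal (V:=R_NormedModule)) with (k := Cm) in HJ. exact HJ. }
    rewrite <- (is_RInt_unique _ _ _ _ HCJ). unfold Im.
    apply RInt_le; auto; [lra|eexists; exact HCJ|]. intros x Hx.
    apply (gm_lower phi n b u0 E0 V x); auto; lra. }
  assert (Hd : Rabs d <= Cz * J).
  { apply (deriv_bound (Fm phi E0) V (Cz * J) (epsQ * (E0 - V))).
    - unfold epsQ. lra.
    - intros t Ht. apply (dq_bound phi n b u0 E0 V J); auto. }
  assert (HCm : 0 < Cm).
  { unfold Cm. unfold epsQ. apply Rmult_lt_0_compat; [apply Rmult_lt_0_compat; [apply Rmult_lt_0_compat|]|]; try lra.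
    apply Rdiv_lt_0_compat; nra. }
  assert (HImp : 0 < Im) by nra.
  assert (HPI : 0 < PI) by apply PI_RGT_0.
  replace (4 * PI / V * Ip / (4 * PI / V * Im) * (- 4 * PI * d / (4 * PI / V * Im)))
    with (- (V * Ip * d) / (Im * Im)) by (field; repeat split; lra).
  unfold Rdiv. rewrite Rabs_mult, Rabs_Ropp, Rabs_Rinv by nra.
  rewrite (Rabs_pos_eq (Im * Im)) by nra.
  rewrite !Rabs_mult, (Rabs_pos_eq V), (Rabs_pos_eq Ip) by lra.
  assert (Hn3 : 0 <= INR n <= 3) by (split; [apply pos_INR| replace 3 with (INR 3) by (simpl; ring); apply le_INR; auto]).
  assert (Hkey : V * (Cp * K) * (Cz * J) < 4/5 * ((Cm * J) * (Cm * J))).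
  { pose proof (bracket (INR n) V E0 T E2 u0 K Hn3 ltac:(lra) HE HV' HT HT2 HE2 HE22 ltac:(nra)) as Hb.
    set (P := c0 * c0 * A * A * (E0 - V) * J).
    assert (HP : 0 < P) by (unfold P; repeat apply Rmult_lt_0_compat; lra).
    replace (V * (Cp * K) * (Cz * J)) with
      (P * ((1+epsQ)*2*T*E2*(INR n*(1+epsQ)+epsQ+(1+epsQ)*(1/2+3*u0))*K/(1-epsQ))).
    2:{ unfold P, Cp, Cz, Bk. unfold epsQ. field. repeat split; lra. }
    replace (4/5 * ((Cm * J) * (Cm * J))) with
      (P * ((4/5)*(1-epsQ)^2*4*(V*V)*(K*(2*INR n+3))/(T*T))).
    2:{ rewrite HKJ. unfold P, Cm. unfold epsQ. rewrite <- HS2. field. repeat split; lra. }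
    apply Rmult_lt_compat_l; auto. }
  assert (HN : V * Ip * Rabs d <= V * (Cp * K) * (Cz * J)).
  { apply Rmult_le_compat; try apply Rabs_pos; auto.
    - apply Rmult_le_pos; lra.
    - apply Rmult_le_compat_l; lra. }
  assert (HD : (Cm * J) * (Cm * J) <= Im * Im) by (apply Rmult_le_compat; nra).
  apply (Rmult_lt_reg_r (Im * Im)); [nra|].
  rewrite Rmult_assoc, Rinv_l, Rmult_1_r by nra.
  lra.
Qed.
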